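(* For every prime $d$, every $n\ge 1$ and every $n$-qudit state $\rho$, the mean state $\mathcal M(\rho)$ is a minimal stabilizer-projection state (MSPS). More precisely, the set $S=\{\vec x\in V^n:|\Xi_\rho(\vec x)|=1\}$ is a subgroup of $V^n$ of size $d^r$ for some $0\le r\le n$ whose Weyl operators pairwise commute, and $\mathcal M(\rho)=P/d^{n-r}$ where $P$ is a minimal projection in the C*-algebra generated by $\{w(\vec x):\vec x\in S\}$.
   Context: Fix a prime $d$ and $n\ge1$. Let $\mathcal H=\mathbb C^d$ with computational basis $\{|k\rangle\}_{k\in\mathbb Z_d}$, $\chi(k)=e^{2\pi i k/d}$, $X|k\rangle=|k+1\rangle$, $Z|k\rangle=\chi(k)|k\rangle$. For $(p,q)\in\mathbb Z_d^2$ the Weyl operator is $w(p,q)=\chi(-2^{-1}pq)Z^pX^q$ if $d$ is odd ($2^{-1}$ the inverse of $2$ mod $d$) and $w(p,q)=i^{-pq}Z^pX^q$ if $d=2$. Let $V^n=\mathbb Z_d^n\times\mathbb Z_d^n$; for $(\vec p,\vec q)\in V^n$ set $w(\vec p,\vec q)=\bigotimes_{k=1}^n w(p_k,q_k)$ on $\mathcal H^{\otimes n}$. A state is a positive semidefinite trace-one operator. The characteristic function of $\rho$ is $\Xi_\rho(\vec p,\vec q)=\mathrm{Tr}[\rho\,w(-\vec p,-\vec q)]$, so that $\rho=d^{-n}\sum_{(\vec p,\vec q)\in V^n}\Xi_\rho(\vec p,\vec q)w(\vec p,\vec q)$. For an abelian group $S$ of Weyl operators (considered up to phases), a minimal projection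 of the C*-algebra $C^*(S)$ generated by $S$ is a minimal stabilizer projection associated with $S$, and a minimal stabilizer-projection state (MSPS) is such a projection divided by its rank. The mean state $\mathcal M(\rho)$ is the operator with characteristic function $\Xi_{\mathcal M(\rho)}(\vec x)=\Xi_\rho(\vec x)$ if $|\Xi_\rho(\vec x)|=1$ and $\Xi_{\mathcal M(\rho)}(\vec x)=0$ otherwise. *)

(* Defs.v *)
(* Complex scalars: an arbitrary numClosedFieldType C
   (e.g. the complex numbers complex R for R : realType). *)
From HB Require Import structures.
From mathcomp Require Import all_boot all_order all_algebra.

Set Implicit Arguments. Unset Strict Implicit. Unset Printing Implicit Defensive.
Import Order.TTheory GRing.Theory Num.Theory.
Local Open Scope ring_scope.

Section Weyl.
Variables (C : numClosedFieldType) (d n : nat).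

(* Operators on a finite-dimensional space whose basis is indexed by a finType I
   are square matrices of size #|I|; [mxI f] is the operator with entries
   <j| A |k> = f j k. *)
Definition mxI (I : finType) (f : I -> I -> C) : 'M[C]_#|I| :=
  \matrix_(a, b) f (enum_val a) (enum_val b).

Definition mxpow (m : nat) (A : 'M[C]_m) (k : nat) : 'M[C]_m :=
  iter k (mulmx A) 1%:M.

Definition adj (m k : nat) (A : 'M[C]_(m, k)) : 'M[C]_(k, m) := (map_mx Num.conj A)^T.

(* omega = e^{2 pi i/d}: d.-root(-1) is the d-th root of -1 of minimal
   nonnegative argument, i.e. e^{i pi/d}; its square is e^{2 pi i/d}. *)
Definition omega : C := (d.-root (-1)) ^+ 2.
Definition chi (k : 'Z_d) : C := omega ^+ (val k).

Definition Xop : 'M[C]_#|'Z_d| := mxI (fun j k : 'Z_d => ((j == k + 1) : nat)%:R).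
Definition Zop : 'M[C]_#|'Z_d| := mxI (fun j k : 'Z_d => ((j == k) : nat)%:R * chi k).

Definition wphase (p q : 'Z_d) : C :=
  if d == 2%N then ('i ^+ (val (p * q)))^-1
  else chi (- ((2%:R : 'Z_d)^-1 * p * q)).

Definition w1 (p q : 'Z_d) : 'M[C]_#|'Z_d| :=
  wphase p q *: (mxpow Zop (val p) *m mxpow Xop (val q)).

(* n-qudit computational basis, phase space V^n = Z_d^n x Z_d^n *)
Definition cfg := {ffun 'I_n -> 'Z_d}.
Definition Vn := (cfg * cfg)%type.
Definition op := 'M[C]_#|{ffun 'I_n -> 'Z_d}|.

(* n-qudit Weyl operator: tensor (Kronecker) product of the w1 (p_k, q_k) *)
Definition W (x : Vn) : op :=
  mxI (fun j k : cfg => \prod_(i < n)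
         w1 (x.1 i) (x.2 i) (enum_rank (j i)) (enum_rank (k i))).

Definition psd (A : op) : Prop :=
  adj A = A /\ forall v : 'cV[C]_#|{ffun 'I_n -> 'Z_d}|, 0 <= (adj v *m A *m v) 0 0.
Definition is_state (rho : op) : Prop := psd rho /\ \tr rho = 1.

Definition charfun (rho : op) (x : Vn) : C := \tr (rho *m W (- x)).

(* mean state: the operator with characteristic function Xi_rho restricted to
   {|Xi_rho| = 1}, via the inversion formula rho = d^{-n} sum_x Xi(x) w(x) *)
Definition mean_state (rho : op) : op :=
  ((d ^ n)%:R)^-1 *: \sum_(x : Vn)
     (if `|charfun rho x| == 1 then charfun rho x else 0) *: W x.

(* C*-algebra generated by a family G of operators: the smallest set of
   operators containing G and closed under 0, +, scalar multiplication,
   products and adjoints (in finite dimension this is automatically closed). *)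
Definition in_Cstar (G : op -> Prop) (A : op) : Prop :=
  forall B : op -> Prop,
    (forall g, G g -> B g) ->
    B 0 ->
    (forall X Y, B X -> B Y -> B (X + Y)) ->
    (forall (c : C) X, B X -> B (c *: X)) ->
    (forall X Y, B X -> B Y -> B (X *m Y)) ->
    (forall X, B X -> B (adj X)) ->
    B A.

Definition is_projection (P : op) : Prop := P *m P = P /\ adj P = P.

Definition minimal_projection (A : op -> Prop) (P : op) : Prop :=
  A P /\ is_projection P /\ P != 0 /\
  forall Q, A Q -> is_projection Q -> P *m Q = Q -> Q = 0 \/ Q = P.

End Weyl.

(* Main.v *)
Require Import Defs.
From HB Require Import structures.
From mathcomp Require Import all_boot all_order all_algebra.
From mathcomp Require Import ring.
Import Order.TTheory GRing.Theory Num.Theory.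
Local Open Scope ring_scope.
Set Implicit Arguments. Unset Strict Implicit. Unset Printing Implicit Defensive.

Section Gen.
Variable C : numClosedFieldType.

Lemma hadjK m k (A : 'M[C]_(m, k)) : adj (adj A) = A.
Proof. by apply/matrixP=> i j; rewrite !mxE conjCK. Qed.

Lemma hadjM m k l (A : 'M[C]_(m, k)) (B : 'M[C]_(k, l)) :
  adj (A *m B) = adj B *m adj A.
Proof.
apply/matrixP=> i j; rewrite !mxE rmorph_sum; apply: eq_bigr => t _.
by rewrite !mxE rmorphM mulrC.
Qed.

Lemma hadjD m k (A B : 'M[C]_(m, k)) : adj (A + B) = adj A + adj B.
Proof. by apply/matrixP=> i j; rewrite !mxE rmorphD. Qed.

Lemma hadjZ m k c (A : 'M[C]_(m, k)) : adj (c *: A) = c^* *: adj A.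
Proof. by apply/matrixP=> i j; rewrite !mxE rmorphM. Qed.

Lemma hadj0 m k : adj (0 : 'M[C]_(m, k)) = 0.
Proof. by apply/matrixP=> i j; rewrite !mxE rmorph0. Qed.

Lemma hadj1 m : adj (1%:M : 'M[C]_m) = 1%:M.
Proof. by apply/matrixP=> i j; rewrite !mxE eq_sym; case: (_ == _); rewrite ?rmorph0 ?rmorph1. Qed.

Lemma tr_hadj m (A : 'M[C]_m) : \tr (adj A) = (\tr A)^*.
Proof. by rewrite /mxtrace rmorph_sum; apply: eq_bigr => i _; rewrite !mxE. Qed.

Lemma hadj_sum m k (I : finType) (P : pred I) (F : I -> 'M[C]_(m, k)) :
  adj (\sum_(i | P i) F i) = \sum_(i | P i) adj (F i).
Proof. by apply: (big_morph _ (@hadjD m k) (@hadj0 m k)). Qed.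

End Gen.

Section Tens.
Variables (C : numClosedFieldType) (d n : nat).

Lemma mxIE (I : finType) (f : I -> I -> C) a b :
  mxI f (enum_rank a) (enum_rank b) = f a b.
Proof. by rewrite mxE !enum_rankK. Qed.

Lemma sumI_enum (I : finType) (F : 'I_#|I| -> C) :
  \sum_(c : 'I_#|I|) F c = \sum_(t : I) F (enum_rank t).
Proof.
rewrite (reindex (@enum_rank I)) //; exists (@enum_val _ _) => x _.
  exact: enum_rankK. exact: enum_valK.
Qed.

Lemma mulmx_enum (I : finType) (A B : 'M[C]_#|I|) a b :
  (A *m B) a b = \sum_(t : I) A a (enum_rank t) * B (enum_rank t) b.
Proof. by rewrite mxE sumI_enum. Qed.

Definition tens (F : 'I_n -> 'M[C]_#|'Z_d|) : op C d n :=
  mxI (fun j k : cfg d n => \prod_(i < n) F i (enum_rank (j i)) (enum_rank (k i))).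

Lemma tensE F (j k : cfg d n) : tens F (enum_rank j) (enum_rank k) =
   \prod_(i < n) F i (enum_rank (j i)) (enum_rank (k i)).
Proof. exact: mxIE. Qed.

Lemma mx_eqI (I : finType) (A B : 'M[C]_#|I|) :
  (forall j k : I, A (enum_rank j) (enum_rank k) = B (enum_rank j) (enum_rank k)) -> A = B.
Proof.
move=> H; apply/matrixP=> a b.
by rewrite -(enum_valK a) -(enum_valK b) H.
Qed.

Lemma tens_eq (A B : op C d n) :
  (forall j k : cfg d n, A (enum_rank j) (enum_rank k) = B (enum_rank j) (enum_rank k)) -> A = B.
Proof.
move=> H; apply/matrixP=> a b.
by rewrite -(enum_valK a) -(enum_valK b) H.
Qed.

Lemma tens_mul F G : tens F *m tens G = tens (fun i => F i *m G i).
Proof.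
apply: tens_eq => j k; rewrite mulmx_enum tensE.
under eq_bigr => t _ do rewrite !tensE -big_split /=.
under [RHS]eq_bigr => i _ do rewrite mulmx_enum.
by rewrite bigA_distr_bigA.
Qed.

Lemma tens1 : tens (fun _ => 1%:M) = 1%:M.
Proof.
apply: tens_eq => j k; rewrite tensE mxE (inj_eq enum_rank_inj).
case: (eqVneq j k) => [->|njk].
  by rewrite big1 // => i _; rewrite mxE eqxx.
have [i Hi] : exists i, j i != k i.
  apply/existsP; apply: contraT; rewrite negb_exists => /forallP H.
  by case/eqP: njk; apply/ffunP => i; apply/eqP; move: (H i); rewrite negbK.
by rewrite (bigD1 i) //= mxE (inj_eq enum_rank_inj) (negbTE Hi) mul0r.
Qed.

Lemma tens_adj F : adj (tens F) = tens (fun i => adj (F i)).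
Proof.
apply: tens_eq => j k; rewrite /adj mxE mxE !tensE rmorph_prod.
by apply: eq_bigr => i _; rewrite !mxE.
Qed.

Lemma tensZ (c : 'I_n -> C) F :
  tens (fun i => c i *: F i) = (\prod_(i < n) c i) *: tens F.
Proof.
apply: tens_eq => j k; rewrite tensE [RHS]mxE tensE -big_split /=.
by apply: eq_bigr => i _; rewrite mxE.
Qed.

Lemma tens_tr F : \tr (tens F) = \prod_(i < n) \tr (F i).
Proof.
rewrite /mxtrace sumI_enum.
under eq_bigr => t _ do rewrite tensE.
under [RHS]eq_bigr => i _ do rewrite sumI_enum.
by rewrite bigA_distr_bigA.
Qed.

End Tens.

Section Omega.
Variables (C : numClosedFieldType) (d : nat).
Hypothesis pd : prime d.

Let d_gt1 : (1 < d)%N := prime_gt1 pd.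
Let d_gt0 : (0 < d)%N := prime_gt0 pd.
Let md : (Zp_trunc d).+2 = d := Zp_cast d_gt1.

Lemma omega_d : omega C d ^+ d = 1.
Proof. by rewrite /omega exprAC rootCK // sqrrN expr1n. Qed.

Lemma omega_neq1 : omega C d != 1.
Proof.
rewrite /omega sqrf_eq1 negb_or; apply/andP; split.
  apply/eqP => h; have := rootCK d_gt0 (-1 : C); rewrite h expr1n => /eqP.
  by rewrite -subr_eq0 opprK -[1 + 1]/(2%:R) pnatr_eq0.
apply/eqP => h; have := rootC_lt0 (-1 : C) d_gt1; rewrite h ltrN10.
by [].
Qed.

Lemma omega_prim : d.-primitive_root (omega C d).
Proof.
have [k pk kd] := prim_order_exists d_gt0 omega_d.
move/primeP: pd => [_ H]; case/orP: (H k kd) => /eqP k1; last by move: pk; rewrite k1.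
by move: pk; rewrite k1 => /prim_expr_order; rewrite expr1 => h; case/eqP: omega_neq1.
Qed.

Lemma norm_omega : `|omega C d| = 1.
Proof.
apply/eqP; rewrite -(pexpr_eq1 d_gt0) // -normrX omega_d normr1 //.
Qed.

Lemma ltZ (a : 'Z_d) : (val a < d)%N.
Proof. by case: a => k /=; rewrite md. Qed.

Lemma val_addZ (a b : 'Z_d) : val (a + b) = ((val a + val b) %% d)%N.
Proof. by transitivity ((val a + val b) %% (Zp_trunc d).+2)%N; [by [] | move: (_ + _)%N => z; by rewrite md]. Qed.

Lemma val_mulZ (a b : 'Z_d) : val (a * b) = ((val a * val b) %% d)%N.
Proof. by transitivity ((val a * val b) %% (Zp_trunc d).+2)%N; [by [] | move: (_ * _)%N => z; by rewrite md]. Qed.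

Lemma chiD (a b : 'Z_d) : chi C (a + b) = chi C a * chi C b.
Proof. by rewrite /chi val_addZ expr_mod ?omega_d // exprD. Qed.

Lemma chi0 : @chi C d 0 = 1.
Proof. by rewrite /chi expr0. Qed.

Lemma chiX (a p : 'Z_d) : chi C a ^+ val p = chi C (a * p).
Proof. by rewrite /chi val_mulZ expr_mod ?omega_d // exprM. Qed.

Lemma norm_chi (a : 'Z_d) : `|chi C a| = 1.
Proof. by rewrite /chi normrX norm_omega expr1n. Qed.

Lemma chiNr (a : 'Z_d) : chi C a * chi C (- a) = 1.
Proof. by rewrite -chiD subrr chi0. Qed.

Lemma conj_norm1 (x : C) : `|x| = 1 -> x * x^* = 1.
Proof. by move=> h; rewrite -normCK h expr1n. Qed.

Lemma chi_conj (a : 'Z_d) : (chi C a)^* = chi C (- a).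
Proof.
have h1 := conj_norm1 (norm_chi a).
have h2 := chiNr a.
have nz : chi C a != 0 by rewrite -normr_eq0 norm_chi oner_eq0.
by apply: (mulfI nz); rewrite h1 h2.
Qed.

Lemma chi_neq0 (a : 'Z_d) : chi C a != 0.
Proof. by rewrite -normr_eq0 norm_chi oner_eq0. Qed.

Lemma sum_chi (p : 'Z_d) : p != 0 -> \sum_(a : 'Z_d) chi C (a * p) = 0.
Proof.
move=> p0.
pose z := omega C d ^+ val p.
have ez : forall a : 'Z_d, chi C (a * p) = z ^+ val a.
  move=> a; rewrite -chiX /chi /z -!exprM; congr (_ ^+ _); by rewrite (mulnC (val a)).
under eq_bigr => a _ do rewrite ez.
have -> : \sum_(a : 'Z_d) z ^+ val a = \sum_(i < (Zp_trunc d).+2) z ^+ i by [].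
rewrite md.
have z1 : z != 1.
  rewrite /z -(prim_order_dvd omega_prim); apply/negP => /dvdnP [k hk].
  have lt := ltZ p; rewrite hk in lt.
  have k0 : k = 0%N by case: k {hk} lt => // k; rewrite mulSn ltnNge leq_addr.
  by move: p0; rewrite -val_eqE /= hk k0 mul0n.
have zd : z ^+ d = 1 by rewrite /z exprAC omega_d expr1n.
have := subrX1 z d; rewrite zd subrr => /esym/eqP.
by rewrite mulf_eq0 subr_eq0 (negbTE z1) => /eqP.
Qed.
End Omega.

Section Qudit.
Variables (C : numClosedFieldType) (d : nat).
Hypothesis pd : prime d.

Local Notation rk := (@enum_rank _).

Lemma Zpow_E k (a b : 'Z_d) : mxpow (Zop C d) k (rk a) (rk b) =
   ((a == b) : nat)%:R * chi C a ^+ k.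
Proof.
elim: k => [|k IH].
  by rewrite /= mxE (inj_eq enum_rank_inj) mulr1.
rewrite [mxpow _ _]/= mulmx_enum (bigD1 a) //= big1 ?addr0.
  by rewrite mxIE IH eqxx !mul1r exprS mulrCA.
by move=> t /negbTE nt; rewrite mxIE (eq_sym a t) nt !mul0r.
Qed.

Lemma Xpow_E k (a b : 'Z_d) : mxpow (Xop C d) k (rk a) (rk b) =
   ((a == b + k%:R) : nat)%:R.
Proof.
elim: k a => [|k IH] a.
  by rewrite /= mxE (inj_eq enum_rank_inj) addr0.
rewrite [mxpow _ _]/= mulmx_enum (bigD1 (b + k%:R)) //= big1 ?addr0.
  by rewrite mxIE IH eqxx mulr1 -natr1 addrA.
by move=> t /negbTE nt; rewrite IH nt mulr0.
Qed.

Lemma w1E (p q a b : 'Z_d) : w1 C p q (rk a) (rk b) =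
  wphase C p q * chi C (a * p) * ((a == b + q) : nat)%:R.
Proof.
rewrite /w1 mxE mulmx_enum (bigD1 a) //= big1 ?addr0.
  by rewrite Zpow_E Xpow_E natr_Zp eqxx mul1r (@chiX C d pd) mulrA.
by move=> t /negbTE nt; rewrite Zpow_E (eq_sym a t) nt !mul0r.
Qed.

End Qudit.

Section Phase.
Variables (C : numClosedFieldType).

Lemma wphase00 d : wphase C (0 : 'Z_d) 0 = 1.
Proof.
rewrite /wphase !mulr0 oppr0; case: ifP => _; first by rewrite expr0 invr1.
exact: chi0.
Qed.

Lemma wphase_norm d (pd : prime d) (p q : 'Z_d) : `|wphase C p q| = 1.
Proof.
rewrite /wphase; case: ifP => _; last exact: norm_chi.
by rewrite normrV ?unitrX ?unitfE ?neq0Ci // normrX normCi expr1n invr1.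
Qed.

Lemma Z2opp (x : 'Z_2) : - x = x.
Proof. by case: x => [[|[|//]]] i; apply/val_inj. Qed.

Lemma omega2 : omega C 2 = -1.
Proof. by rewrite /omega rootCK. Qed.

Lemma wphase_adj d (pd : prime d) (p q : 'Z_d) :
  (wphase C p q)^* * chi C (- (p * q)) = wphase C (- p) (- q).
Proof.
rewrite /wphase !mulrN !mulNr !opprK; case: eqP => [d2|nd2].
  subst d; rewrite Z2opp /chi omega2.
  have : (val (p * q)%R < 2)%N by apply: ltn_ord.
  move: (val (p * q)) => [|[|//]] _.
    by rewrite !expr0 invr1 rmorph1 mul1r.
  by rewrite !expr1 rmorphV ?unitfE ?neq0Ci //= conjCi invrN mulrN mulr1 opprK.
have u2 : (2%:R : 'Z_d) \is a GRing.unit.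
  rewrite unitZpE ?prime_gt1 // prime_coprime //; apply/negP => /(@dvdn_leq _ 2 isT) le2.
  by case: nd2; apply/eqP; rewrite eqn_leq le2 prime_gt1.
rewrite (@chi_conj C d pd) opprK -(@chiD C d pd); congr chi.
set h := (2%:R : 'Z_d)^-1.
have -> : p * q = (h * 2%:R) * (p * q) by rewrite mulVr // mul1r.
rewrite -!mulrA (_ : 2%:R = 1 + 1 :> 'Z_d) // mulrDl mul1r mulrDr.
by rewrite opprD addrA subrr sub0r.
Qed.

End Phase.

Section Qudit2.
Variables (C : numClosedFieldType) (d : nat).
Hypothesis pd : prime d.
Local Notation rk := (@enum_rank _).

Lemma wphase_neq0 (p q : 'Z_d) : wphase C p q != 0.
Proof. by rewrite -normr_eq0 (wphase_norm C pd) oner_eq0. Qed.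

Lemma w1_00 : w1 C (0 : 'Z_d) 0 = 1%:M.
Proof.
apply: mx_eqI => a b; rewrite (w1E _ pd) wphase00 mulr0 chi0 addr0 !mul1r.
by rewrite mxE (inj_eq enum_rank_inj).
Qed.

Lemma w1_mul (p q p' q' : 'Z_d) : w1 C p q *m w1 C p' q' =
  (wphase C p q * wphase C p' q' * chi C (- (p' * q)) / wphase C (p + p') (q + q'))
    *: w1 C (p + p') (q + q').
Proof.
apply: mx_eqI => a b; rewrite mulmx_enum (bigD1 (b + q')) //= big1 ?addr0; last first.
  by move=> t /negbTE nt; rewrite !(w1E _ pd) nt !mulr0.
rewrite [RHS]mxE !(w1E _ pd) eqxx mulr1 (addrC q q') addrA.
case: (eqVneq a (b + q' + q)) => [->|na] /=; last by rewrite !mulr0 !mul0r.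
rewrite !mulr1.
have nz := wphase_neq0 (p + p') (q' + q).
rewrite -!mulrA; congr (_ * _); rewrite mulKf // mulrCA; congr (_ * _).
rewrite -!(@chiD C d pd); congr chi; ring.
Qed.

Lemma w1_adj (p q : 'Z_d) : adj (w1 C p q) = w1 C (- p) (- q).
Proof.
apply: mx_eqI => a b; rewrite /adj mxE mxE !(w1E _ pd).
case: (eqVneq b (a + q)) => [->|nb].
  rewrite /= addrK eqxx !mulr1 rmorphM /= (@chi_conj C d pd) -(wphase_adj C pd).
  rewrite -mulrA; congr (_ * _); rewrite -(@chiD C d pd); congr chi; ring.
rewrite /= mulr0 rmorph0.
have -> : (a == b + - q) = false.
  by apply/negbTE; apply: contra nb => /eqP ->; rewrite subrK.
by rewrite mulr0.
Qed.

Lemma w1_unit (p q : 'Z_d) : w1 C p q *m adj (w1 C p q) = 1%:M.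
Proof.
rewrite w1_adj w1_mul !subrr w1_00 wphase00 divr1.
rewrite -(wphase_adj C pd) mulrA (conj_norm1 (wphase_norm C pd p q)) mul1r.
by rewrite mulNr opprK -(@chiD C d pd) addrC subrr chi0 scale1r.
Qed.

Lemma w1_tr (p q : 'Z_d) : (p != 0) || (q != 0) -> \tr (w1 C p q) = 0.
Proof.
move=> H; rewrite /mxtrace sumI_enum.
case: (eqVneq q 0) => [q0|nq].
  rewrite q0 /= in H.
  subst q.
  under eq_bigr => a _ do rewrite (w1E _ pd) addr0 eqxx mulr1.
  rewrite orbF in H; by rewrite -mulr_sumr (@sum_chi C d pd) ?mulr0.
apply: big1 => a _; rewrite (w1E _ pd).
have -> : (a == a + q) = false.
  by apply/negbTE; apply: contra nq => /eqP h; rewrite -(addrI a (esym (etrans (addr0 a) h))).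
by rewrite mulr0.
Qed.

End Qudit2.

Section CS.
Variable C : numClosedFieldType.

Lemma scal_null (K a : C) : 0 <= K ->
  (forall t : C, 0 <= t * a^* + t^* * a + t^* * t * K) -> a = 0.
Proof.
move=> K0 H.
have K1 : K + 1 != 0 by rewrite gt_eqF // ltr_wpDl.
set u := (K + 1)^-1.
have uc : u^* = u by rewrite geC0_conj // invr_ge0 addr_ge0.
have := H (- a * u).
have -> : (- a * u)^* = - a^* * u by rewrite rmorphM rmorphN /= uc.
set N := a * a^*.
have -> : - a * u * a^* + - a^* * u * a + - a^* * u * (- a * u) * K =
  - (N * (K + 2%:R)) / (K + 1) ^+ 2.
  rewrite /N /u; field; exact: K1.
rewrite ler_pdivlMr ?exprn_gt0 ?ltr_wpDl // mul0r oppr_ge0 => X0.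
have N0 : 0 <= N by rewrite /N -normCK exprn_ge0.
have X1 : 0 <= N * (K + 2%:R) by rewrite mulr_ge0 // addr_ge0.
have : N * (K + 2%:R) = 0 by apply/le_anti; rewrite X0 X1.
move/eqP; rewrite mulf_eq0 => /orP [].
  by rewrite /N -normCK sqrf_eq0 normr_eq0 => /eqP.
by rewrite gt_eqF // ltr_wpDl.
Qed.

Definition qf m (R : 'M[C]_m) (v : 'cV[C]_m) : C := (adj v *m R *m v) 0 0.

Lemma hadjB m k (A B : 'M[C]_(m, k)) : adj (A - B) = adj A - adj B.
Proof. by apply/matrixP=> i j; rewrite !mxE rmorphB. Qed.

Lemma psd_null m (R : 'M[C]_m) : adj R = R -> (forall v, 0 <= qf R v) ->
  forall v, qf R v = 0 -> R *m v = 0.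
Proof.
move=> hR pR v qv.
have key : forall w : 'cV[C]_m, (adj w *m R *m v) 0 0 = 0.
  move=> w; set a := (adj w *m R *m v) 0 0.
  apply: (@scal_null (qf R w)) => // t.
  have ha : a^* = (adj v *m R *m w) 0 0.
    by rewrite /a -[in RHS]hR -[in RHS](hadjK w) -!hadjM mulmxA !mxE.
  have := pR (v + t *: w).
  have E1 : forall A B : 'M[C]_1, (A + B) 0 0 = A 0 0 + B 0 0 by move=> *; rewrite mxE.
  have E2 : forall c (A : 'M[C]_1), (c *: A) 0 0 = c * A 0 0 by move=> *; rewrite mxE.
  rewrite /qf hadjD hadjZ !mulmxDl !mulmxDr -!scalemxAl -!scalemxAr !E1 !E2.
  rewrite -/(qf R v) qv add0r ha -/(qf R w) -/a.
  by rewrite !addrA mulrA.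
apply/matrixP => i j; rewrite (ord1 j) [RHS]mxE.
have hd : adj (delta_mx i 0 : 'cV[C]_m) = delta_mx 0 i.
  apply/matrixP => a b; rewrite !mxE; case: (_ == _); case: (_ == _); by rewrite /= ?rmorph1 ?rmorph0.
have := key (delta_mx i 0); rewrite hd -mulmxA -rowE mxE.
by move->.
Qed.

Lemma hadj_scalar m (a : C) : adj (a%:M : 'M[C]_m) = a^*%:M.
Proof.
apply/matrixP=> i j; rewrite !mxE eq_sym; case: (_ == _); by rewrite /= ?mulr1n ?mulr0n ?rmorph0.
Qed.

Lemma qf_col m (R M : 'M[C]_m) j : (adj M *m R *m M) j j = qf R (col j M).
Proof.
rewrite /qf !mxE; apply: eq_bigr => k _; rewrite !mxE; congr (_ * _).
by apply: eq_bigr => l _; rewrite !mxE.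
Qed.

Lemma mul_col m (R M : 'M[C]_m) i j : (R *m M) i j = (R *m col j M) i 0.
Proof. by rewrite !mxE; apply: eq_bigr => k _; rewrite !mxE. Qed.

Lemma cs_eig m (R U : 'M[C]_m) : adj R = R -> (forall v, 0 <= qf R v) -> \tr R = 1 ->
  U *m adj U = 1%:M -> `|\tr (R *m U)| = 1 -> R *m U = \tr (R *m U) *: R.
Proof.
move=> hR pR tR hU nl; set l := \tr (R *m U).
have t1 : \tr (adj U *m R *m U) = 1 by rewrite mxtrace_mulC mulmxA hU mul1mx.
have t2 : \tr (adj U *m R) = l^*.
  by rewrite mxtrace_mulC -{1}hR -hadjM tr_hadj mxtrace_mulC.
set M := U - l%:M.
have trz : \tr (adj M *m R *m M) = 0.
  rewrite /M hadjB hadj_scalar mulmxBl mul_scalar_mx mulmxBr mulmxBl mul_mx_scalar -scalemxAl.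
  rewrite !linearB /= !mxtraceZ ?linearB /= ?mxtraceZ t1 t2 tR -/l.
  have c1 : l * l^* = 1 by rewrite -normCK nl expr1n.
  by rewrite mulr1 (mulrC l^*) c1 !subrr.
have each : forall j, qf R (col j M) = 0.
  move=> j; move: trz; rewrite /mxtrace.
  under eq_bigr => k _ do rewrite qf_col.
  by move/psumr_eq0P => H; apply: H => // k _; apply: pR.
have RM : R *m M = 0.
  by apply/matrixP => i j; rewrite mul_col (psd_null hR pR (each j)) !mxE.
apply/eqP; rewrite -subr_eq0 -mul_mx_scalar -mulmxBr. exact/eqP.
Qed.

End CS.

Section Rank.
Variable C : numClosedFieldType.

Lemma idem_aux r m (A : 'M[C]_(m, r)) (B : 'M[C]_(r, m)) (L : 'M[C]_(r, m)) :
  L *m A = 1%:M -> row_free B -> A *m B *m (A *m B) = A *m B -> B *m A = 1%:M.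
Proof.
move=> hL fB e; apply: (row_free_inj fB); rewrite mul1mx.
have := congr1 (mulmx L) e; rewrite !mulmxA hL !mul1mx.
by [].
Qed.

Lemma rank_idem m (P : 'M[C]_m) : P *m P = P -> (\rank P)%:R = \tr P.
Proof.
move=> hP.
have AB := mulmx_base P.
have [L hL] : exists L, L *m col_base P = 1%:M by apply/row_fullP; exact: col_base_full.
have BA : row_base P *m col_base P = 1%:M.
  by apply: (idem_aux hL (row_base_free P)); rewrite AB hP.
by rewrite -{2}AB mxtrace_mulC BA mxtrace1.
Qed.

End Rank.

Section WLemmas.
Variables (C : numClosedFieldType) (d n : nat).
Hypothesis pd : prime d.

Lemma tens_ext (F G : 'I_n -> 'M[C]_#|'Z_d|) : (forall i, F i = G i) -> tens F = tens G.
Proof. by move=> H; apply: tens_eq => j k; rewrite !tensE; apply: eq_bigr => i _; rewrite H. Qed.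

Lemma W_tens (x : Vn d n) : W C x = tens (fun i => w1 C (x.1 i) (x.2 i)).
Proof. by []. Qed.

Lemma W0 : W C (0 : Vn d n) = 1%:M.
Proof.
rewrite W_tens -tens1; apply: tens_ext => i /=; rewrite !ffunE.
exact: (w1_00 C pd).
Qed.

Lemma W_adj (x : Vn d n) : adj (W C x) = W C (- x).
Proof.
rewrite !W_tens tens_adj; apply: tens_ext => i /=; rewrite !ffunE.
exact: (w1_adj C pd).
Qed.

Lemma W_unit (x : Vn d n) : W C x *m adj (W C x) = 1%:M.
Proof.
rewrite W_tens tens_adj tens_mul -tens1; apply: tens_ext => i.
exact: (w1_unit C pd).
Qed.

Lemma W_unit' (x : Vn d n) : adj (W C x) *m W C x = 1%:M.
Proof. exact: mulmx1C (W_unit x). Qed.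

Lemma W_mul (x y : Vn d n) : exists c : C, W C x *m W C y = c *: W C (x + y).
Proof.
rewrite !W_tens tens_mul.
exists (\prod_(i < n) (wphase C (x.1 i) (x.2 i) * wphase C (y.1 i) (y.2 i) *
  chi C (- (y.1 i * x.2 i)) / wphase C (x.1 i + y.1 i) (x.2 i + y.2 i))).
rewrite -tensZ; apply: tens_ext => i.
by rewrite (w1_mul C pd) /= !ffunE.
Qed.

Lemma card_cfg : #|cfg d n| = (d ^ n)%N.
Proof. by rewrite card_ffun card_ord card_ord Zp_cast // prime_gt1. Qed.

Lemma W_tr (x : Vn d n) : \tr (W C x) = if x == 0 then (d ^ n)%:R else 0.
Proof.
case: eqP => [->|nx]; first by rewrite W0 mxtrace1 card_cfg.
rewrite W_tens tens_tr.
have [i Hi] : exists i, (x.1 i != 0) || (x.2 i != 0).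
  apply/existsP; apply: contraT; rewrite negb_exists => /forallP H.
  case: nx; case: x H => x1 x2 H /=; congr (_, _); apply/ffunP => i;
    move: (H i); rewrite negb_or !negbK => /andP[/eqP h1 /eqP h2]; rewrite ffunE //.
by rewrite (bigD1 i) //= (w1_tr C pd) ?mul0r.
Qed.


Lemma N_neq0 : ((d ^ n)%:R : C) != 0.
Proof. by rewrite pnatr_eq0 expn_eq0 negb_and (gtn_eqF (prime_gt0 pd)). Qed.

Lemma W_mul_unit (x y : Vn d n) : exists c : C, c * c^* = 1 /\ W C x *m W C y = c *: W C (x + y).
Proof.
have [c hc] := W_mul x y; exists c; split => //.
have e : (W C x *m W C y) *m adj (W C x *m W C y) = 1%:M.
  by rewrite hadjM mulmxA -(mulmxA (W C x)) W_unit mulmx1 W_unit.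
move: e; rewrite hc hadjZ -scalemxAl -scalemxAr W_unit scalerA => e.
have := congr1 mxtrace e; rewrite mxtraceZ mxtrace1 => /eqP.
rewrite -subr_eq0 -{2}[_%:R]mul1r -mulrBl mulf_eq0 card_cfg (negbTE N_neq0) orbF subr_eq0.
by move/eqP.
Qed.

End WLemmas.

Section Main.
Variables (C : numClosedFieldType) (d n : nat).
Hypothesis pd : prime d.
Variable rho : op C d n.
Hypothesis hst : is_state rho.

Let hR : adj rho = rho. Proof. by case: hst => [[]]. Qed.
Let pR : forall v, 0 <= qf rho v. Proof. by case: hst => [[]]. Qed.
Let tR : \tr rho = 1. Proof. by case: hst. Qed.

Definition Sg := [set x : Vn d n | `|charfun rho x| == 1].
Local Notation lam := (charfun rho).

Lemma inSg x : (x \in Sg) = (`|lam x| == 1).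
Proof. by rewrite inE. Qed.

Lemma lam_unit x : x \in Sg -> lam x * (lam x)^* = 1.
Proof. by rewrite inSg => /eqP h; rewrite -normCK h expr1n. Qed.

Lemma lam_neq0 x : x \in Sg -> lam x != 0.
Proof. by move/lam_unit => h; apply/eqP => h0; move: h; rewrite h0 mul0r => /eqP; rewrite eq_sym oner_eq0. Qed.

Lemma eigR x : x \in Sg -> rho *m W C (- x) = lam x *: rho.
Proof.
move=> hx; rewrite /charfun; apply: (cs_eig hR pR tR (W_unit C pd _)).
by move: hx; rewrite inSg => /eqP.
Qed.

Lemma W_adjN (x : Vn d n) : adj (W C (- x)) = W C x.
Proof. by rewrite (W_adj C pd) opprK. Qed.

Lemma eigL x : x \in Sg -> W C x *m rho = (lam x)^* *: rho.
Proof.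
move=> hx; have := congr1 (@adj C _ _) (eigR hx).
by rewrite hadjM hR W_adjN hadjZ hR.
Qed.

Lemma eigR' x : x \in Sg -> rho *m W C x = (lam x)^* *: rho.
Proof.
move=> hx; have u := W_unit C pd (- x); rewrite W_adjN in u.
have e : rho = lam x *: (rho *m W C x).
  by rewrite -{1}(mulmx1 rho) -u mulmxA (eigR hx) -scalemxAl.
apply: (scalerI (lam_neq0 hx)); rewrite -e scalerA (lam_unit hx) scale1r //.
Qed.

Lemma rho_neq0 : rho != 0.
Proof. by apply/eqP => h; move: tR; rewrite h linear0 => /eqP; rewrite eq_sym oner_eq0. Qed.

Lemma Sg0 : (0 : Vn d n) \in Sg.
Proof. by rewrite inSg /charfun oppr0 (W0 C n pd) mulmx1 tR normr1. Qed.

Lemma SgB x y : x \in Sg -> y \in Sg -> x - y \in Sg.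
Proof.
move=> hx hy.
have [c [hc e]] := W_mul_unit C pd y (- x).
have t : \tr (rho *m (W C y *m W C (- x))) = (lam y)^* * lam x.
  by rewrite mulmxA (eigR' hy) -scalemxAl (eigR hx) scalerA mxtraceZ tR mulr1.
have e' : y + - x = - (x - y) by rewrite opprB addrC.
rewrite e -scalemxAr mxtraceZ e' in t.
have {}t : c * lam (x - y) = (lam y)^* * lam x by exact: t.
have : (c * lam (x - y)) * (c * lam (x - y))^* = 1.
  by rewrite t rmorphM /= conjCK mulrACA (mulrC _ (lam y)) (lam_unit hy) (lam_unit hx) mulr1.
rewrite rmorphM mulrACA hc mul1r -normCK => /eqP.
by rewrite sqrp_eq1 ?normr_ge0 // => h; rewrite inSg.
Qed.


Lemma SgN x : x \in Sg -> - x \in Sg.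
Proof. by move=> hx; rewrite -sub0r; apply: SgB => //; exact: Sg0. Qed.

Lemma SgD x y : x \in Sg -> y \in Sg -> x + y \in Sg.
Proof. by move=> hx hy; rewrite -(opprK y); apply: SgB => //; exact: SgN. Qed.

Definition V x := lam x *: W C x.

Lemma V_rho x : x \in Sg -> V x *m rho = rho.
Proof. by move=> hx; rewrite /V -scalemxAl (eigL hx) scalerA (lam_unit hx) scale1r. Qed.

Lemma V_mul x y : x \in Sg -> y \in Sg -> V x *m V y = V (x + y).
Proof.
move=> hx hy; have [c [_ e]] := W_mul_unit C pd x y.
have h : V x *m V y = (lam x * lam y * c) *: W C (x + y).
  by rewrite /V -scalemxAl -scalemxAr e !scalerA.
have hxy := SgD hx hy.
have k : lam x * lam y * c = lam (x + y).
  have : (V x *m V y) *m rho = rho by rewrite -mulmxA !V_rho.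
  rewrite h -scalemxAl (eigL hxy) scalerA => e2.
  have : (lam x * lam y * c * (lam (x + y))^* - 1) *: rho = 0 by rewrite scalerBl e2 scale1r subrr.
  move/eqP; rewrite scaler_eq0 (negbTE rho_neq0) orbF subr_eq0 => /eqP h1.
  by rewrite -[LHS]mulr1 -(lam_unit hxy) mulrCA h1 mulr1.
by rewrite h k.
Qed.

Lemma Sg_comm x y : x \in Sg -> y \in Sg -> W C x *m W C y = W C y *m W C x.
Proof.
move=> hx hy; have := V_mul hx hy; rewrite addrC -(V_mul hy hx) /V.
rewrite -!scalemxAl -!scalemxAr !scalerA (mulrC (lam y)).
by apply: scalerI; rewrite mulf_neq0 // lam_neq0.
Qed.

Lemma sum_shift y : y \in Sg -> \sum_(x in Sg) V (y + x) = \sum_(x in Sg) V x.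
Proof.
move=> hy; rewrite [RHS](reindex_inj (addrI y)) /=; apply: eq_bigl => x.
apply/idP/idP => h; first exact: SgD.
by rewrite -(addKr y x); apply: SgD => //; exact: SgN.
Qed.

Lemma sum_neg : \sum_(x in Sg) V (- x) = \sum_(x in Sg) V x.
Proof.
rewrite [RHS](reindex_inj (inv_inj (@opprK (Vn d n)))) /=; apply: eq_bigl => x.
apply/idP/idP => h; first exact: SgN.
by rewrite -(opprK x); exact: SgN.
Qed.

Definition kS : C := (#|Sg|%:R)^-1.
Definition Pm : op C d n := kS *: \sum_(x in Sg) V x.

Lemma cS : (0 < #|Sg|)%N.
Proof. by apply/card_gt0P; exists 0; exact: Sg0. Qed.

Lemma cS_neq0 : (#|Sg|%:R : C) != 0.
Proof. by rewrite pnatr_eq0 -lt0n cS. Qed.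

Lemma VP y : y \in Sg -> V y *m Pm = Pm.
Proof.
move=> hy; rewrite /Pm -scalemxAr mulmx_sumr.
by under eq_bigr => x hx do rewrite (V_mul hy hx); rewrite sum_shift.
Qed.

Lemma PV y : y \in Sg -> Pm *m V y = Pm.
Proof.
move=> hy; rewrite /Pm -scalemxAl mulmx_suml.
by under eq_bigr => x hx do rewrite (V_mul hx hy) addrC; rewrite sum_shift.
Qed.

Lemma P_idem : Pm *m Pm = Pm.
Proof.
rewrite {2}/Pm -scalemxAr mulmx_sumr.
under eq_bigr => x hx do rewrite (PV hx).
by rewrite sumr_const -scaler_nat scalerA mulVf ?cS_neq0 // scale1r.
Qed.

Lemma lamN x : lam (- x) = (lam x)^*.
Proof. by rewrite /charfun opprK -tr_hadj hadjM hR W_adjN mxtrace_mulC. Qed.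

Lemma adjV x : adj (V x) = V (- x).
Proof. by rewrite /V hadjZ (W_adj C pd) lamN. Qed.

Lemma P_adj : adj Pm = Pm.
Proof.
rewrite /Pm hadjZ hadj_sum.
under eq_bigr => x hx do rewrite adjV.
by rewrite sum_neg geC0_conj // invr_ge0 ler0n.
Qed.

Lemma trP : \tr Pm = kS * (d ^ n)%:R.
Proof.
rewrite /Pm mxtraceZ linear_sum /=.
under eq_bigr => x _ do rewrite /V mxtraceZ (W_tr C pd).
rewrite (bigD1 (0 : Vn d n)) ?Sg0 //= big1 ?addr0 => [|x /andP[_ /negbTE ->]]; last by rewrite mulr0.
by rewrite eqxx /charfun oppr0 (W0 C n pd) mulmx1 tR mul1r.
Qed.

Lemma P_neq0 : Pm != 0.
Proof.
apply/eqP => h; have := trP; rewrite h linear0 => /esym/eqP.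
by rewrite mulf_eq0 invr_eq0 (negbTE cS_neq0) (negbTE (N_neq0 C n pd)).
Qed.


Definition Gs (A : op C d n) : Prop := exists2 x, x \in Sg & A = W C x.

Lemma P_Cstar : in_Cstar Gs Pm.
Proof.
move=> B hG h0 hD hZ hM hA; rewrite /Pm; apply: (hZ).
apply: (big_ind B) => //= x hx; apply: (hZ); apply: (hG); by exists x.
Qed.

Lemma WP x : x \in Sg -> W C x *m Pm = (lam x)^-1 *: Pm.
Proof.
move=> hx; apply: (scalerI (lam_neq0 hx)).
by rewrite scalerA mulfV ?lam_neq0 // scale1r scalemxAl -[RHS](VP hx).
Qed.

Lemma PW x : x \in Sg -> Pm *m W C x = (lam x)^-1 *: Pm.
Proof.
move=> hx; apply: (scalerI (lam_neq0 hx)).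
by rewrite scalerA mulfV ?lam_neq0 // scale1r scalemxAr -[RHS](PV hx).
Qed.

Lemma P_min Q : in_Cstar Gs Q -> is_projection Q -> Pm *m Q = Q -> Q = 0 \/ Q = Pm.
Proof.
move=> hQ [QQ QA] PQ.
have [a [h1 h2]] : exists a, Pm *m Q = a *: Pm /\ Q *m Pm = a *: Pm.
  apply: (hQ (fun A => exists a, Pm *m A = a *: Pm /\ A *m Pm = a *: Pm)).
  - by move=> g [x hx ->]; exists (lam x)^-1; split; [exact: PW | exact: WP].
  - by exists 0; rewrite mulmx0 mul0mx scale0r.
  - move=> X Y [a [hX1 hX2]] [b [hY1 hY2]]; exists (a + b).
    by rewrite mulmxDr mulmxDl hX1 hX2 hY1 hY2 scalerDl.
  - move=> c X [a [hX1 hX2]]; exists (c * a).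
    by rewrite -scalemxAr -scalemxAl hX1 hX2 scalerA.
  - move=> X Y [a [hX1 hX2]] [b [hY1 hY2]]; exists (a * b); split.
      by rewrite mulmxA hX1 -scalemxAl hY1 scalerA.
    by rewrite -mulmxA hY2 -scalemxAr hX2 scalerA mulrC.
  - move=> X [a [hX1 hX2]]; exists a^*; split.
      by rewrite -{1}P_adj -hadjM hX2 hadjZ P_adj.
    by rewrite -{1}P_adj -hadjM hX1 hadjZ P_adj.
have eQ : Q = a *: Pm by rewrite -PQ h1.
move: QQ; rewrite eQ -scalemxAl -scalemxAr P_idem scalerA => e.
have : (a * a - a) *: Pm = 0 by rewrite scalerBl e subrr.
move/eqP; rewrite scaler_eq0 (negbTE P_neq0) orbF.
rewrite -{3}(mulr1 a) -mulrBr mulf_eq0 subr_eq0 => /orP [/eqP ->|/eqP ->].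
  by left; rewrite scale0r.
by right; rewrite scale1r.
Qed.


Lemma mean_eq : mean_state rho = ((d ^ n)%:R)^-1 *: \sum_(x in Sg) V x.
Proof.
rewrite /mean_state; congr (_ *: _); rewrite [RHS]big_mkcond; apply: eq_bigr => x _.
by rewrite inSg; case: ifP => _; rewrite ?scale0r.
Qed.

Lemma main_sec :
  let S := Sg in
  [/\ 0 \in S,
      (forall x y, x \in S -> y \in S -> x - y \in S),
      (forall x y, x \in S -> y \in S -> W C x *m W C y = W C y *m W C x) &
      exists r : nat, exists P : op C d n,
        [/\ (r <= n)%N, #|S| = (d ^ r)%N,
            minimal_projection (in_Cstar (fun A => exists2 x, x \in S & A = W C x)) P,
            \rank P = (d ^ (n - r))%N &
            mean_state rho = ((d ^ (n - r))%:R)^-1 *: P]].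
Proof.
move=> S; split; [exact: Sg0 | exact: SgB | exact: Sg_comm |].
have rk : (\rank Pm * #|Sg|)%N = (d ^ n)%N.
  have e := rank_idem P_idem; rewrite trP in e.
  by apply/eqP; rewrite -(@eqr_nat C) natrM e /kS mulrC mulrA mulfV ?cS_neq0 // mul1r.
have [r rn hr] : exists2 r, (r <= n)%N & #|Sg| = (d ^ r)%N.
  by apply/(dvdn_pfactor _ _ pd); apply/dvdnP; exists (\rank Pm); rewrite rk.
have dr : (d ^ n)%N = (d ^ (n - r) * d ^ r)%N by rewrite -expnD subnK.
exists r, Pm; split => //.
- split; first exact: P_Cstar.
  split; first by split; [exact: P_idem | exact: P_adj].
  split; first exact: P_neq0.
  exact: P_min.
- apply/eqP; rewrite -(@eqn_pmul2r (d ^ r)) ?expn_gt0 ?prime_gt0 //.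
  by rewrite -dr -hr rk.
- rewrite mean_eq /Pm scalerA /kS hr dr natrM invfM //.
Qed.

End Main.

Unset Implicit Arguments.

Theorem mainTheorem1 (C : numClosedFieldType) (d n : nat) :
  prime d -> (0 < n)%N ->
  forall rho : op C d n, is_state rho ->
  let S := [set x : Vn d n | `|charfun rho x| == 1] in
  [/\ 0 \in S,
      (forall x y, x \in S -> y \in S -> x - y \in S),
      (forall x y, x \in S -> y \in S -> W C x *m W C y = W C y *m W C x) &
      exists r : nat, exists P : op C d n,
        [/\ (r <= n)%N, #|S| = (d ^ r)%N,
            minimal_projection (in_Cstar (fun A => exists2 x, x \in S & A = W C x)) P,
            \rank P = (d ^ (n - r))%N &
            mean_state rho = ((d ^ (n - r))%:R)^-1 *: P]].
Proof.
move=> pd _ rho hst.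
exact: (main_sec pd hst).
Qed.
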